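(* Let $X$ be an extensible marked Dynkin diagram with $d$ nodes, and let $\gamma=(x,y)\in\mathcal H_2$ with $|\gamma|_X=0$. Let $l=\max(\ell(x),d)$ and $r=\ell(y)$. Then there exist integers $p_i$ ($1\le i\le l-1$), $q_j$ ($1\le j\le r-1$) and $s$ such that for all $n\ge l+r$, $$\gamma^{(n)}=\sum_{i=1}^{l-1}p_i\alpha_i^{(n)}+\sum_{i=l}^{n-r+1}s\,\alpha_i^{(n)}+\sum_{i=n-r+2}^{n}q_{n-i+1}\alpha_i^{(n)}.$$
   Context: A marked Dynkin diagram $X$ has nodes $1,\dots,d$ with node $d$ distinguished and symmetrizable generalized Cartan matrix $C(X)$. For $n\ge d$, $X_n$ is obtained by attaching a simply-laced chain of new nodes $d+1,\dots,n$ to node $d$ (so $C(X_n)$ has $C(X)$ as upper-left block, $2$ on the remaining diagonal, $-1$ in positions $(i,i+1),(i+1,i)$ for $d\le i<n$, $0$ elsewhere); $X_{d-1}$ is $X$ with node $d$ deleted. $\det(Y)$ is the determinant of the generalized Cartan matrix of $Y$. The sequence $\det(X_n)$, $n\ge d$, is arithmetic with common difference $\Delta$; $X$ is extensible if $\Delta\ne0$, $\det(X)\ne0$ and $\gcd(\Delta,\det X)=1$. For $\mathfrak g(X_n)$: simple roots $\alpha_i^{(n)}$, fundamental weights $\omega_i^{(n)}$, $\overline{\omega}_i^{(n)}=\omega_{n-i+1}^{(n)}$. $\mathcal H_1$ is the set of finitely supported integer sequences, $\ell(x)=\max\{i:x_i\ne0\}$, $\mathcal H_2=\mathcal H_1\times\mathcal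 H_1$; for $\gamma=(x,y)$ and $n\ge\ell(y)+\max(d,\ell(x))$, $\gamma^{(n)}=\sum_ix_i\omega_i^{(n)}+\sum_iy_i\overline{\omega}_i^{(n)}$. Integers $a_i$: for $1\le i\le d$, $a_i=\det(X)(C(X)^{-1})_{d\,i}$; for $i>d$, $a_i=\det(X_{i-1})$. $|\gamma|_X=\sum_ia_ix_i-\Delta\sum_i i\,y_i$. *)

(* Defs.v *)
From HB Require Import structures.
From mathcomp Require Import all_boot all_order all_algebra.
Set Implicit Arguments. Unset Strict Implicit. Unset Printing Implicit Defensive.
Import Order.TTheory GRing.Theory Num.Theory.
Local Open Scope ring_scope.

(* A marked Dynkin diagram X with d nodes is given by d and a function
   cX : nat -> nat -> int; the (0-indexed) entries cX i j with i, j < d form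
   the generalized Cartan matrix C(X).  Node d (1-indexed) is the last index,
   d.-1 in 0-indexed form. *)

Definition cartanX (d : nat) (cX : nat -> nat -> int) : 'M[int]_d :=
  \matrix_(i < d, j < d) cX i j.

Definition is_GCM (n : nat) (A : 'M[int]_n) : Prop :=
  (forall i, A i i = 2) /\
  (forall i j, i != j -> A i j <= 0) /\
  (forall i j, A i j = 0 <-> A j i = 0).

Definition symmetrizable (n : nat) (A : 'M[int]_n) : Prop :=
  exists eps : 'I_n -> rat, (forall i, 0 < eps i) /\
    (forall i j, eps i * (A i j)%:~R = eps j * (A j i)%:~R).

(* C(X_n) (0-indexed entries), X_n = X with a simply-laced chain of new nodes
   d+1..n attached at node d.  For n < d this is the leading principal
   submatrix; in particular extmx d cX d.-1 is C(X_{d-1}). *)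
Definition ext_entry (d : nat) (cX : nat -> nat -> int) (i j : nat) : int :=
  if (i < d)%N && (j < d)%N then cX i j
  else if i == j then 2
  else if ((i.+1 == j) || (j.+1 == i)) && (d.-1 <= minn i j)%N then -1
  else 0.

Definition extmx (d : nat) (cX : nat -> nat -> int) (n : nat) : 'M[int]_n :=
  \matrix_(i < n, j < n) ext_entry d cX i j.

Definition detX (d : nat) (cX : nat -> nat -> int) (n : nat) : int :=
  \det (extmx d cX n).

(* common difference Delta of the arithmetic sequence det(X_n), n >= d *)
Definition DeltaX (d : nat) (cX : nat -> nat -> int) : int :=
  detX d cX d.+1 - detX d cX d.

Definition extensible (d : nat) (cX : nat -> nat -> int) : Prop :=
  DeltaX d cX != 0 /\ detX d cX d != 0 /\ coprimez (DeltaX d cX) (detX d cX d).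

(* The integers a_i, i >= 1 (1-indexed).
   For 1 <= i <= d : det(X) (C(X)^{-1})_{d,i} = adj(C(X))_{d,i}. *)
Definition acoef (d : nat) (cX : nat -> nat -> int) (i : nat) : int :=
  if (i <= d)%N then
    (match d as d' return 'M[int]_d' -> int with
     | 0 => fun _ => 0
     | d'.+1 => fun A => \adj A ord_max (inord i.-1)
     end) (cartanX d cX)
  else detX d cX i.-1.

(* Elements of H_1: finitely supported integer sequences (x_1, x_2, ...),
   represented by a list; x_i = nth 0 x (i-1) for i >= 1. *)
Definition hcoef (x : seq int) (i : nat) : int :=
  if i is k.+1 then nth 0 x k else 0.

Definition ell (x : seq int) : nat := (
  \max_(k < size x | nth (0:int) x k != (0:int)) k.+1)%N.

Definition gammaNormX (d : nat) (cX : nat -> nat -> int) (x y : seq int) : int :=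
  \sum_(k < size x) acoef d cX k.+1 * hcoef x k.+1
  - DeltaX d cX * \sum_(k < size y) (k.+1)%:Z * hcoef y k.+1.

(* Coefficient of omega_j^{(n)} (j 1-indexed) in gamma^{(n)} =
   sum_i x_i omega_i + sum_i y_i omega_{n-i+1}. *)
Definition gamma_coef (x y : seq int) (n j : nat) : int :=
  hcoef x j + (if (1 <= j <= n)%N then hcoef y (n - j).+1 else 0).

(* Main.v *)
Require Import Defs.
From HB Require Import structures.
From mathcomp Require Import all_boot all_order all_algebra.
From mathcomp Require Import zify ring lra.
Import Order.TTheory GRing.Theory Num.Theory.
Local Open Scope ring_scope.

Definition fmx (f : nat -> nat -> int) n : 'M[int]_n := \matrix_(i < n, j < n) f i j.

Lemma minor_max (f : nat -> nat -> int) n :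
  row' ord_max (col' ord_max (fmx f n.+1)) = fmx f n.
Proof. by apply/matrixP => i j; rewrite !mxE !lift_max. Qed.

Lemma det_rec (f : nat -> nat -> int) n :
 (forall j, (j < n)%N -> f n.+1 j = 0) -> f n.+1 n = -1 -> f n.+1 n.+1 = 2 ->
 (forall i, (i < n)%N -> f i n.+1 = 0) -> f n n.+1 = -1 ->
 \det (fmx f n.+2) = 2 * \det (fmx f n.+1) - \det (fmx f n).
Proof.
move=> r0 r1 r2 c0 c1.
rewrite (expand_det_row _ ord_max) big_ord_recr big_ord_recr /=.
rewrite big1 ?add0r; last first.
  by move=> j _; rewrite /fmx mxE [f _ _](r0 j) ?mul0r.
rewrite {2}/cofactor minor_max.
rewrite {1 3}/fmx !mxE [f _ ord_max]r2 [f _ (widen_ord _ _)]r1.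
rewrite /cofactor.
set M := row' _ _.
have -> : \det M = - \det (fmx f n).
  rewrite (expand_det_col _ ord_max) big_ord_recr /= big1 ?add0r; last first.
    move=> i _; rewrite /M !mxE lift_max /= /bump leqnn add1n [f _ _](c0 i) ?mul0r //.
  rewrite /cofactor /M !mxE lift_max /= /bump leqnn add1n [f _ _]c1.
  have -> : row' ord_max (col' ord_max (row' ord_max (col' (widen_ord (leqnSn n.+1) ord_max) (fmx f n.+2)))) = fmx f n.
    apply/matrixP => i j; rewrite !mxE /=.
    have hi : (i < n)%N := ltn_ord i.
    have hj : (j < n)%N := ltn_ord j.
    congr f; rewrite /bump.
      by rewrite (leqNgt n i) hi /= add0n leqNgt ltnW.
    by rewrite (leqNgt n j) hj /= add0n leqNgt hj.
  by rewrite -signr_odd addnn odd_double expr0 mul1r mulN1r.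
have -> : (-1) ^+ (@ord_max n.+1 + widen_ord (leqnSn n.+1) (@ord_max n))%N = -1 :> int.
  by rewrite -signr_odd /= addnn odd_double.
have -> : (-1) ^+ (@ord_max n.+1 + @ord_max n.+1)%N = 1 :> int.
  by rewrite -signr_odd addnn odd_double.
by rewrite mul1r mulN1r mulN1r opprK addrC.
Qed.

Lemma sum_ind N k (F : nat -> int) :
  \sum_(m < N) (if (m : nat) == k then F m else 0) = if (k < N)%N then F k else 0.
Proof.
case: ltnP => h.
  rewrite (bigD1 (Ordinal h)) //= eqxx big1 ?addr0 // => i ne.
  rewrite ifN //; apply: contra ne => /eqP e; apply/eqP/val_inj => /=; exact: e.
by rewrite big1 // => i _; rewrite ifN // neq_ltn (leq_trans (ltn_ord i) h).
Qed.

Lemma sum_ext N K (F : nat -> int) : (N <= K)%N ->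
  (forall m, (N <= m)%N -> (m < K)%N -> F m = 0) ->
  \sum_(m < N) F m = \sum_(m < K) F m.
Proof.
move=> hNK hF.
rewrite -(big_mkord xpredT) -(big_mkord xpredT F) [RHS](@big_cat_nat _ _ _ N) //=.
rewrite [X in _ = _ + X]big_nat_cond [X in _ = _ + X]big1 ?addr0 //.
by move=> i /andP[/andP[h1 h2] _]; apply: hF.
Qed.

Lemma hcoef_ell x k : (ell x < k)%N -> hcoef x k = 0.
Proof.
case: k => [//|k] /= h.
case: (ltnP k (size x)) => hk; last by rewrite nth_default.
apply/eqP; apply: contraLR h => nz; rewrite -leqNgt.
exact: (@leq_bigmax_cond _ (fun i : 'I_(size x) => nth 0 x i != 0) (fun i : 'I_(size x) => (i : nat).+1) (Ordinal hk)).
Qed.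

Definition Wy (y : seq int) : int := \sum_(k < size y) (k.+1)%:Z * hcoef y k.+1.
Definition Rf (y : seq int) (k : nat) : int :=
  \sum_(m < size y) (minn k m.+1)%:Z * hcoef y m.+1.
Definition Lf (x y : seq int) (k : nat) : int :=
  Wy y - \sum_(m < size x) ((m.+1 - k)%N)%:Z * hcoef x m.+1.

Lemma Rf0 y : Rf y 0 = 0.
Proof. by rewrite /Rf big1 // => m _; rewrite min0n mul0r. Qed.

Lemma Rf_big y k : (ell y <= k)%N -> Rf y k = Wy y.
Proof.
move=> h; apply: eq_bigr => m _.
case: (ltnP (ell y) m.+1) => hm; first by rewrite hcoef_ell // !mulr0.
by rewrite (minn_idPr (leq_trans hm h)).
Qed.

Lemma Lf_big x y k : (ell x <= k)%N -> Lf x y k = Wy y.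
Proof.
move=> h; rewrite /Lf big1 ?subr0 // => m _.
case: (ltnP (ell x) m.+1) => hm; first by rewrite hcoef_ell // !mulr0.
have e : (m.+1 - k = 0)%N by apply/eqP; rewrite subn_eq0 (leq_trans hm h).
by rewrite e mul0r.
Qed.

Lemma Rf_diff y k : 2 * Rf y k.+1 - Rf y k - Rf y k.+2 = hcoef y k.+1.
Proof.
rewrite /Rf mulr_sumr -!sumrB.
rewrite (eq_bigr (fun m : 'I_(size y) => if (m : nat) == k then hcoef y m.+1 else 0)).
  rewrite sum_ind; case: ltnP => h //=.
  by rewrite nth_default.
move=> m _; case: eqP => [->|ne].
  rewrite minnn (minn_idPl (leqnSn k)) (minn_idPr (leqnSn k.+1)).
  rewrite !intS; ring.
rewrite mulrA -!mulrBl; apply/eqP; rewrite mulf_eq0; apply/orP; left.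
apply/eqP.
have [h|h] := ltnP m k.
  rewrite (minn_idPr h) (minn_idPr (ltnW h : (m.+1 <= k.+1)%N)) (minn_idPr (leq_trans (ltnW h) (leqnSn k) : (m.+1 <= k.+2)%N)).
  ring.
have h' : (k < m)%N by rewrite ltn_neqAle h andbT; apply/eqP => e; apply: ne; rewrite e.
rewrite (minn_idPl (leq_trans h (leqnSn m))) (minn_idPl (h : (k.+1 <= m.+1)%N)) (minn_idPl (h' : (k.+2 <= m.+1)%N)).
rewrite !intS; ring.
Qed.

Lemma Lf_diff x y k : 2 * Lf x y k.+1 - Lf x y k - Lf x y k.+2 = hcoef x k.+1.
Proof.
rewrite /Lf.
set S := fun k => \sum_(m < size x) ((m.+1 - k)%N)%:Z * hcoef x m.+1.
rewrite -/(S k) -/(S k.+1) -/(S k.+2).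
rewrite [LHS](_ : _ = S k + S k.+2 - 2 * S k.+1); last ring.
rewrite /S mulr_sumr -big_split -sumrB /=.
rewrite (eq_bigr (fun m : 'I_(size x) => if (m : nat) == k then hcoef x m.+1 else 0)).
  rewrite sum_ind; case: ltnP => h //=.
  by rewrite nth_default.
move=> m _; case: eqP => [->|ne].
  have e : ((k.+1 - k)%N%:Z + (k.+1 - k.+2)%N%:Z - 2 * (k.+1 - k.+1)%N%:Z = 1 :> int) by lia.
  by rewrite mulrA -mulrDl -mulrBl e mul1r.
have e : ((m.+1 - k)%N%:Z + (m.+1 - k.+2)%N%:Z - 2 * (m.+1 - k.+1)%N%:Z = 0 :> int).
  have ne' : (m : nat) <> k by [].
  lia.
by rewrite mulrA -mulrDl -mulrBl e mul0r.
Qed.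

Definition tri (i j : nat) : int :=
  if i == j then 2 else if (i.+1 == j) || (j.+1 == i) then -1 else 0.

Ltac tri_tac := rewrite /tri; repeat (case: eqP => ?); rewrite /= ?orbT ?orbF; try lia.

Lemma ext_tri d cX i j : (d <= maxn i j)%N -> ext_entry d cX i j = tri i j.
Proof.
move=> h; rewrite /ext_entry /tri.
have -> : ((i < d)%N && (j < d)%N) = false.
  apply/negbTE; rewrite negb_and -!leqNgt; move: h; rewrite leq_max => /orP[->|->] //.
  by rewrite orbT.
case: eqP => // ne.
case E: ((i.+1 == j) || (j.+1 == i)) => //=.
have -> // : (d.-1 <= minn i j)%N.
move: E => /orP[/eqP|/eqP] e; lia.
Qed.

Lemma detX_rec d cX n : (d <= n.+1)%N -> detX d cX n.+2 = 2 * detX d cX n.+1 - detX d cX n.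
Proof.
move=> h; apply: det_rec.
- move=> j hj; rewrite ext_tri ?leq_max ?h //; tri_tac.
- rewrite ext_tri ?leq_max ?h //; tri_tac.
- rewrite ext_tri ?leq_max ?h //; tri_tac.
- move=> j hj; rewrite ext_tri ?leq_max ?h ?orbT //; tri_tac.
- rewrite ext_tri ?leq_max ?h ?orbT //; tri_tac.
Qed.

Lemma detX_lin d cX m : (0 < d)%N ->
  detX d cX (d + m) = detX d cX d + m%:Z * DeltaX d cX.
Proof.
move=> d0.
suff : detX d cX (d + m) = detX d cX d + m%:Z * DeltaX d cX /\
       detX d cX (d + m.+1) = detX d cX d + m.+1%:Z * DeltaX d cX by case.
elim: m => [|m [IH1 IH2]].
  by rewrite addn0 addn1 mul0r addr0 mul1r /DeltaX; split => //; ring.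
split => //.
rewrite -addn2 addnA addn2 detX_rec; last by rewrite ltnW // ltnS leq_addr.
rewrite -addnS IH2 IH1 addn2 !intS; ring.
Qed.

Lemma detX_pred d cX : (0 < d)%N -> detX d cX d.-1 = detX d cX d - DeltaX d cX.
Proof.
case: d => // d _ /=.
have := @detX_rec d.+1 cX d (leqnn _).
rewrite /DeltaX => ->; ring.
Qed.

Lemma cartan_ext d cX : extmx d cX d = cartanX d cX.
Proof. by apply/matrixP => i j; rewrite !mxE /ext_entry !ltn_ord. Qed.

Section Core.
Variables (d' : nat) (cX : nat -> nat -> int) (x y : seq int).
Local Notation d := d'.+1.
Local Notation A := (cartanX d'.+1 cX).
Local Notation D := (detX d'.+1 cX d'.+1).
Local Notation Dl := (DeltaX d'.+1 cX).

Definition bv (k : nat) : int := hcoef x k.+1 + (if k == d' then Lf x y d.+1 else 0).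
Definition Nv (i : nat) : int := \sum_(k < d) \adj A (inord i) k * bv k.

Lemma detA : \det A = D.
Proof. by rewrite /detX cartan_ext. Qed.

Lemma claim1 j : (j < d)%N -> \sum_(i < d) cX j i * Nv i = D * bv j.
Proof.
move=> hj.
rewrite (eq_bigr (fun i : 'I_d => \sum_(k < d) (A (inord j) i * \adj A i k) * bv k)); last first.
  move=> i _; rewrite /Nv big_distrr /=; apply: eq_bigr => k _.
  by rewrite inord_val [A _ i]mxE inordK // mulrA.
rewrite exchange_big /=.
rewrite (eq_bigr (fun k : 'I_d => if (k : nat) == j then D * bv k else 0)).
  by rewrite (sum_ind d j (fun k => D * bv k)) hj.
move=> k _; rewrite -big_distrl /=.
have := congr1 (fun M : 'M_d => M (inord j) k) (mul_mx_adj A).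
rewrite !mxE detA => ->.
case: (eqVneq (k : nat) j) => [e|ne].
  have -> : inord j = k by apply/val_inj; rewrite /= inordK // e.
  by rewrite eqxx mulr1n.
have -> : (inord j == k) = false.
  apply/negbTE; apply: contra_neq ne => <-; by rewrite inordK.
by rewrite mulr0n mul0r.
Qed.


Lemma adj_maxmax : \adj A ord_max ord_max = detX d cX d'.
Proof.
rewrite mxE /cofactor -signr_odd addnn odd_double expr0 mul1r /detX.
congr (\det _); apply/matrixP => i j; rewrite !mxE !lift_max /ext_entry.
by rewrite (ltn_trans (ltn_ord i) (ltnSn d')) (ltn_trans (ltn_ord j) (ltnSn d')).
Qed.

Lemma acoef_low k : (k < d)%N -> acoef d cX k.+1 = \adj A ord_max (inord k).
Proof. by move=> hk; rewrite /acoef ltnS -ltnS hk. Qed.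

Lemma acoef_high k : (d <= k)%N -> acoef d cX k.+1 = D + (k - d)%N%:Z * Dl.
Proof.
move=> hk; rewrite /acoef ltnS leqNgt hk /=.
by rewrite -(subnKC hk) detX_lin // subnKC.
Qed.

Lemma key : gammaNormX d cX x y = 0 ->
  \sum_(k < d) acoef d cX k.+1 * hcoef x k.+1 + detX d cX d' * Lf x y d.+1 = D * Lf x y d.
Proof.
move=> norm.
have hD' : detX d cX d' = D - Dl by rewrite -detX_pred.
pose G k := if (k < d)%N then acoef d cX k.+1 * hcoef x k.+1 else 0.
have e1 : \sum_(k < d) acoef d cX k.+1 * hcoef x k.+1 = \sum_(k < size x) G k.
  rewrite (eq_bigr (fun k : 'I_d => G k)); last by move=> k _; rewrite /G ltn_ord.
  rewrite (sum_ext d (size x + d) G (leq_addl (size x) d)); last first.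
    by move=> m hm _; rewrite /G ltnNge hm.
  rewrite -(sum_ext (size x) (size x + d) G (leq_addr d (size x))) // => m hm _.
  by rewrite /G /= nth_default // mulr0; case: ifP.
have e2 : forall k : 'I_(size x), G k = acoef d cX k.+1 * hcoef x k.+1 -
     (D * (k.+1 - d)%N%:Z - detX d cX d' * (k.+1 - d.+1)%N%:Z) * hcoef x k.+1.
  move=> k; rewrite /G; case: ltnP => hk.
    have -> : (k.+1 - d = 0)%N by apply/eqP; rewrite subn_eq0.
    have -> : (k.+1 - d.+1 = 0)%N by apply/eqP; rewrite subn_eq0 ltnW.
    by rewrite !mulr0 subrr mul0r subr0.
  have e3 : ((k.+1 - d)%N%:Z = (k - d)%N%:Z + 1 :> int) by lia.
  have e4 : ((k.+1 - d.+1)%N%:Z = (k - d)%N%:Z :> int) by lia.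
  rewrite acoef_high // hD' e3 e4; ring.
rewrite e1 (eq_bigr _ (fun k _ => e2 k)) sumrB.
move: norm; rewrite /gammaNormX => /eqP; rewrite subr_eq0 => /eqP ->.
rewrite /Lf -/(Wy y).
rewrite (eq_bigr (fun k : 'I_(size x) => D * ((k.+1 - d)%N%:Z * hcoef x k.+1) - detX d cX d' * ((k.+1 - d.+1)%N%:Z * hcoef x k.+1))); last by move=> k _; ring.
rewrite sumrB -!mulr_sumr hD'; rewrite /Wy; ring.
Qed.

Lemma claim2 : gammaNormX d cX x y = 0 -> Nv d' = D * Lf x y d.
Proof.
move=> norm; rewrite -key // /Nv.
have -> : inord d' = ord_max :> 'I_d by apply/val_inj; rewrite /= inordK.
rewrite big_ord_recr /= [X in _ = X + _]big_ord_recr /= /bv eqxx.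
rewrite (eq_bigr (fun k : 'I_d' => acoef d cX k.+1 * hcoef x k.+1)); last first.
  move=> k _; rewrite ifN ?addr0; last by rewrite neq_ltn ltn_ord.
  rewrite acoef_low /=; last by rewrite ltnS ltnW.
  by congr (_ * _); congr (\adj A _ _); apply/val_inj; rewrite /= inordK // ltnS ltnW.
rewrite acoef_low // adj_maxmax.
have -> : inord d' = ord_max :> 'I_d by apply/val_inj; rewrite /= inordK.
rewrite adj_maxmax; ring.
Qed.

Lemma claim3 : extensible d cX -> gammaNormX d cX x y = 0 ->
  forall i, (i < d)%N -> (D %| Nv i)%Z.
Proof.
move=> [_ [_ cop]] norm.
pose M := extmx d cX d.+1.
pose w : 'cV[int]_d.+1 := \col_(i < d.+1) (if (i < d)%N then Nv i else D * Lf x y d.+1).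
have sa : forall k : 'I_d.+1, (D %| (M *m w) k ord0)%Z.
  move=> k; rewrite mxE big_ord_recr /=.
  apply: rpredD; last by rewrite !mxE ltnn dvdz_mull // dvdz_mulr.
  rewrite (eq_bigr (fun i : 'I_d => ext_entry d cX k i * Nv i)); last first.
    by move=> i _; rewrite !mxE /= ltn_ord.
  case: (ltnP k d) => hk.
    rewrite (eq_bigr (fun i : 'I_d => cX k i * Nv i)); last first.
      by move=> i _; rewrite /ext_entry hk ltn_ord.
    by rewrite claim1 // dvdz_mulr.
  apply: rpred_sum => i _.
  have ek : (k : nat) = d by apply/eqP; rewrite eqn_leq hk -ltnS ltn_ord.
  rewrite ek.
  case: (eqVneq (i : nat) d') => [->|ne].
    by rewrite claim2 // dvdz_mull // dvdz_mulr.
  rewrite ext_tri ?leq_max ?leqnn //.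
  have hi : (i < d')%N by rewrite ltn_neqAle ne -ltnS ltn_ord.
  have -> : tri d i = 0 by tri_tac.
  by rewrite mul0r dvdz0.
have sb : forall i : 'I_d.+1, (D %| \det M * w i ord0)%Z.
  move=> i.
  have hM := mulmxA (\adj M) M w.
  rewrite mul_adj_mx mul_scalar_mx in hM.
  have := congr1 (fun B : 'cV_d.+1 => B i ord0) hM.
  rewrite [in X in _ = X]mxE => <-.
  rewrite mxE; apply: rpred_sum => k _; exact: dvdz_mull.
have detM : \det M = D + Dl by rewrite /DeltaX /detX; ring.
have cop' : coprimez D (D + Dl) by rewrite /coprimez gcdzDl -/(coprimez D Dl) coprimez_sym.
move=> i hi.
have := sb (inord i).
rewrite detM !mxE /= inordK; last by rewrite ltnW.
rewrite hi.
by rewrite (Gauss_dvdzr _ cop').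
Qed.

Lemma core_u : extensible d cX -> gammaNormX d cX x y = 0 ->
  exists u : nat -> int, (forall j, (j < d)%N -> \sum_(i < d) cX j i * u i = bv j) /\ u d' = Lf x y d.
Proof.
move=> ext norm; have Dnz : D != 0 by case: ext => _ [].
exists (fun i => (Nv i %/ D)%Z); split.
  move=> j hj; apply: (mulfI Dnz); rewrite -claim1 // mulr_sumr.
  apply: eq_bigr => i _.
  by rewrite mulrCA [D * _]mulrC divzK // claim3.
by apply: (mulfI Dnz); rewrite [D * _]mulrC divzK ?claim3 // claim2.
Qed.

End Core.

Lemma row_tri (c : nat -> int) (j N : nat) : (0 < j)%N -> (j.+1 < N)%N ->
  \sum_(i < N) c i * tri j i = 2 * c j - c j.-1 - c j.+1.
Proof.
move=> hj hN.
rewrite (eq_bigr (fun i : 'I_N => ((if (i : nat) == j then 2 * c i else 0)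
   - (if (i : nat) == j.-1 then c i else 0)) - (if (i : nat) == j.+1 then c i else 0))); last first.
  move=> i _; case: j hj hN => // j _ hN /=.
  rewrite /tri; do ! case: eqP => ?; rewrite /= ?orbT ?orbF; first [ring | lia].
rewrite !sumrB (sum_ind N j (fun i => 2 * c i)) (sum_ind N j.-1 c) (sum_ind N j.+1 c).
rewrite hN (ltn_trans (ltnSn j) hN) (leq_ltn_trans (leq_pred j) (ltn_trans (ltnSn j) hN)).
done.
Qed.

Lemma row_low d cX (c : nat -> int) (j N : nat) : (j < d)%N -> (d < N)%N ->
  \sum_(i < N) c i * ext_entry d cX j i =
  \sum_(i < d) c i * cX j i - (if j == d.-1 then c d else 0).
Proof.
move=> hj hN.
rewrite (eq_bigr (fun i : 'I_N => (if (i < d)%N then c i * cX j i else 0)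
   - (if (i : nat) == d then (if j == d.-1 then c i else 0) else 0))); last first.
  move=> i _; case: (ltnP i d) => hi.
    by rewrite /ext_entry hi hj /= ifN ?subr0 // neq_ltn hi.
  rewrite ext_tri ?leq_max ?hi ?orbT // sub0r /tri.
  do ! case: eqP => ?; rewrite /= ?orbT ?orbF; first [ring | lia].
rewrite sumrB (sum_ind N d (fun i => if j == d.-1 then c i else 0)) hN.
congr (_ - _).
rewrite -(sum_ext d N (fun i => if (i < d)%N then c i * cX j i else 0) (ltnW hN)).
  by apply: eq_bigr => i _; rewrite ltn_ord.
by move=> m hm _; rewrite ltnNge hm.
Qed.

Theorem proposition4p1 (d : nat) (cX : nat -> nat -> int) (x y : seq int) :
  (0 < d)%N ->
  is_GCM (cartanX d cX) ->
  symmetrizable (cartanX d cX) ->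
  extensible d cX ->
  gammaNormX d cX x y = 0 ->
  let l := maxn (ell x) d in
  let r := ell y in
  exists (p q : nat -> int) (s : int),
    forall n : nat, (l + r <= n)%N ->
      forall j : 'I_n,
        gamma_coef x y n j.+1 =
        \sum_(i < n)
           (if (i.+1 <= l - 1)%N then p i.+1
            else if (i.+1 <= n - r + 1)%N then s
            else q (n - i.+1 + 1)%N) * extmx d cX n j i.
Proof.
move=> d0 _ _ ext norm.
case: d d0 ext norm => // d' _ ext norm l r.
have [u [hu hud]] := @core_u d' cX x y ext norm.
pose P k := if (k <= d'.+1)%N then u k.-1 else Lf x y k.
exists P, (Rf y), (Wy y) => n hn j.
have hr : r = ell y by [].
have hl : (d'.+1 <= l)%N := leq_maxr _ _.
have hlx : (ell x <= l)%N := leq_maxl _ _.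
clearbody l r.
have PL : forall k, (d'.+1 <= k)%N -> P k = Lf x y k.
  move=> k hk; rewrite /P; case: leqP => // h.
  have -> : k = d'.+1 by apply/eqP; rewrite eqn_leq h hk.
  exact: hud.
have PW : forall k, (l <= k)%N -> P k = Wy y.
  by move=> k hk; rewrite PL ?(leq_trans hl hk) // Lf_big // (leq_trans hlx hk).
have Pu : forall k, (k <= d'.+1)%N -> P k = u k.-1.
  by move=> k hk; rewrite /P hk.
clearbody P.
have W0 : r = 0%N -> Wy y = 0.
  by move=> r0; rewrite -(Rf_big y 0) ?Rf0 // -hr r0.
pose c i := if (i.+1 <= n - r + 1)%N then P i.+1 else Rf y (n - i).
have cn : c n = 0.
  rewrite /c; case: ifP => h; last by rewrite subnn Rf0.
  rewrite PW; [apply: W0 | ]; lia.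
have cb : forall i, (l <= i.+1)%N -> (i <= n)%N -> c i = Rf y (n - i).
  move=> i h1 h2; rewrite /c; case: ifP => h //.
  rewrite PW // Rf_big //; lia.
have cd : forall i, (i < n)%N -> (if (i.+1 <= l - 1)%N then P i.+1
     else if (i.+1 <= n - r + 1)%N then Wy y else Rf y (n - i.+1 + 1)) = c i.
  move=> i hi; rewrite /c.
  case: ifP => h1; first by rewrite ifT //; lia.
  case: ifP => h2; first by rewrite PW //; lia.
  by congr (Rf y _); lia.
have ca : forall i, (i.+1 <= n - r + 1)%N -> c i = P i.+1.
  by move=> i hi; rewrite /c hi.
clearbody c.
rewrite (eq_bigr (fun i : 'I_n => c i * ext_entry d'.+1 cX j i)); last first.
  by move=> i _; rewrite cd // mxE.
have -> : \sum_(i < n) c i * ext_entry d'.+1 cX j i = \sum_(i < n.+1) c i * ext_entry d'.+1 cX j i.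
  by rewrite big_ord_recr /= cn mul0r addr0.
have hj1 : (1 <= j.+1 <= n)%N by rewrite ltn_ord.
rewrite /gamma_coef hj1.
have hjn : (j < n)%N := ltn_ord j.
case: (ltnP j d'.+1) => hj.
  rewrite (@row_low d'.+1 cX c j n.+1 hj); last by lia.
  rewrite (eq_bigr (fun i : 'I_d'.+1 => cX j i * u i)); last first.
    move=> i _; rewrite ca; last by have := ltn_ord i; lia.
    by rewrite Pu ?ltn_ord // mulrC.
  rewrite hu // /bv /= ca; last by lia.
  rewrite PL // (_ : y`_(n - j.+1) = 0); last first.
    by apply: (hcoef_ell y (n - j.+1).+1); lia.
  ring.
have [j' ej] : exists j', (j : nat) = j'.+1.
  by exists j.-1; rewrite prednK // (leq_trans _ hj).
rewrite (eq_bigr (fun i : 'I_n.+1 => c i * tri j i)); last first.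
  by move=> i _; rewrite ext_tri // leq_max hj.
rewrite row_tri ?ej //; last by lia.
case: (leqP j'.+3 (n - r + 1)) => h.
  rewrite (_ : j'.+1.-1 = j') // !ca; try lia.
  rewrite !PL; try lia.
  rewrite (hcoef_ell y); last by lia.
  rewrite -(Lf_diff x y j'.+1); ring.
rewrite (_ : j'.+1.-1 = j') // !cb; try lia.
rewrite (hcoef_ell x); last by lia.
have e1 : (n - j' = (n - j'.+2).+2)%N by lia.
have e2 : (n - j'.+1 = (n - j'.+2).+1)%N by lia.
have e3 : ((n - j'.+2).+1 = (n - j'.+2).+1)%N by [].
rewrite e1 e2 -(Rf_diff y (n - j'.+2)); ring.
Qed.
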